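(* Let $\mathcal{A}=\{A_1,\dots,A_m\}$ be a bimodal collection of pairwise disjoint nonempty subsets of a finite abelian group $G$, with internal difference groups $H_1,\dots,H_m$, labelled so that $|A_i|<|H_i|$ exactly for $i=1,\dots,r$, where $r\ge2$. Let $D=(a_1+H_1)\setminus A_1$, where $a_1+H_1$ is the coset of $H_1$ containing $A_1$, and suppose $\mathcal{A}$ is in canonical position, i.e. $D$ is a subgroup of $G$. Then for every $i\ge r+1$, $H_i$ is a subgroup of $D$.
   Context: $G$ is written additively. The internal difference group $H_i$ of $A_i$ is the subgroup generated by all $x-y$ with $x,y\in A_i$; $A_i$ lies in a single coset of $H_i$ and $|A_i|\le|H_i|$. A collection $\{A_1,\dots,A_m\}$ of pairwise disjoint subsets of $G$ is bimodal if for every $i$ and every $\delta\in G\setminus\{0\}$, the number $N_i(\delta)$ of pairs $(a,b)$ with $a\in A_i$, $b\in A_j$ for some $j\neq i$, and $a-b=\delta$, satisfies $N_i(\delta)\in\{0,|A_i|\}$. (For such collections with $r\ge2$ the set $D$ equals $(a_i+H_i)\setminus A_i$ for every $i\le r$ and is a coset of a subgroup; canonical position means the collection has been translated so that $D$ is a subgroup.) *)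

(* Defs.v *)
From mathcomp Require Import all_boot all_order all_algebra.
Set Implicit Arguments. Unset Strict Implicit. Unset Printing Implicit Defensive.
Import GRing.Theory.
Local Open Scope ring_scope.

Definition is_subgroup (G : finZmodType) (K : {set G}) : bool :=
  (0 \in K) && [forall x in K, forall y in K, x - y \in K].

Definition diffs (G : finZmodType) (A : {set G}) : {set G} :=
  [set x - y | x in A, y in A].

Definition idg (G : finZmodType) (A : {set G}) : {set G} :=
  \bigcap_(K : {set G} | is_subgroup K && (diffs A \subset K)) K.

(* N_i(delta): the number of pairs (a,b), a in A_i, b in A_j for some j <> i
   (j < m), with a - b = delta.  The collection is A 0, ..., A (m-1). *)
Definition Ncount (G : finZmodType) (m : nat) (A : nat -> {set G}) (i : nat)
    (delta : G) : nat :=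
  #|[set ab : G * G | [&& ab.1 \in A i,
       [exists j : 'I_m, (val j != i) && (ab.2 \in A j)] &
       ab.1 - ab.2 == delta]]|.

Definition bimodal (G : finZmodType) (m : nat) (A : nat -> {set G}) : Prop :=
  forall i, (i < m)%N -> forall delta : G, delta != 0 ->
    Ncount m A i delta = 0%N \/ Ncount m A i delta = #|A i|.

Definition coset_add (G : finZmodType) (a : G) (H : {set G}) : {set G} :=
  [set a + h | h in H].

(* Main.v *)
Require Import Defs.
From mathcomp Require Import all_boot all_order all_algebra.
Local Open Scope ring_scope.
Import GRing.Theory.

Section Aux.
Variable G : finZmodType.

Lemma sg0 (K : {set G}) : is_subgroup K -> 0 \in K.
Proof. by case/andP. Qed.

Lemma sgB (K : {set G}) x y : is_subgroup K -> x \in K -> y \in K -> x - y \in K.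
Proof. by case/andP=> _ /forall_inP H xK yK; move/forall_inP: (H x xK) => /(_ y yK). Qed.

Lemma sgN (K : {set G}) y : is_subgroup K -> y \in K -> - y \in K.
Proof. by move=> HK yK; rewrite -sub0r sgB // sg0. Qed.

Lemma sgD (K : {set G}) x y : is_subgroup K -> x \in K -> y \in K -> x + y \in K.
Proof. by move=> HK xK yK; rewrite -(opprK y) sgB // sgN. Qed.

Lemma idg_min (A K : {set G}) : is_subgroup K -> diffs A \subset K -> idg A \subset K.
Proof. by move=> HK HdK; apply: bigcap_inf; rewrite HK HdK. Qed.

Lemma idg_diff (A : {set G}) x y : x \in A -> y \in A -> x - y \in idg A.
Proof.
move=> xA yA; apply/bigcapP => K /andP [_ /subsetP]; apply.
by apply/imset2P; exists x y.
Qed.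

Lemma idg_sg (A : {set G}) : is_subgroup (idg A).
Proof.
apply/andP; split.
  by apply/bigcapP => K /andP [HK _]; exact: sg0.
apply/forall_inP => x Hx; apply/forall_inP => y Hy.
apply/bigcapP => K HKd; have /andP [HK _] := HKd.
by apply: sgB => //; [move/bigcapP: Hx | move/bigcapP: Hy]; apply.
Qed.

Definition Bset (m : nat) (A : nat -> {set G}) (j : nat) (x : G) : bool :=
  [exists k : 'I_m, (val k != j) && (x \in A k)].

Lemma Ncount_eq m (A : nat -> {set G}) j delta :
  Ncount m A j delta = #|[set a in A j | Bset m A j (a - delta)]|.
Proof.
rewrite /Ncount.
have -> : [set ab : G * G | [&& ab.1 \in A j,
       [exists j0 : 'I_m, (val j0 != j) && (ab.2 \in A j0)] &
       ab.1 - ab.2 == delta]] =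
   (fun a => (a, a - delta)) @: [set a in A j | Bset m A j (a - delta)].
  apply/setP => [[x y]]; rewrite inE /=; apply/idP/imsetP.
    case/and3P => xA yB /eqP <-; exists x; last by rewrite subKr.
    by rewrite inE xA /Bset subKr.
  case=> a; rewrite inE => /andP [aA aB] [-> ->].
  by rewrite aA subKr eqxx andbT.
by apply: card_imset => a b [].
Qed.

Lemma BM m (A : nat -> {set G}) j delta a a' : bimodal m A -> (j < m)%N -> delta != 0 ->
  a \in A j -> Bset m A j (a - delta) -> a' \in A j -> Bset m A j (a' - delta).
Proof.
move=> Hb Hj Hd aA aB a'A.
set T := [set a in A j | Bset m A j (a - delta)].
have Tsub : T \subset A j by apply/subsetP => x; rewrite inE => /andP [].
have : (0 < #|T|)%N by apply/card_gt0P; exists a; rewrite inE aA.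
have := Hb j Hj delta Hd; rewrite Ncount_eq -/T => -[-> //| HT _].
have /eqP TA : T == A j by rewrite eqEcard Tsub HT leqnn.
by move: a'A; rewrite -TA inE => /andP [].
Qed.

Lemma Bperiodic m (A : nat -> {set G}) j g x :
  (forall i j, (i < m)%N -> (j < m)%N -> i <> j -> [disjoint A i & A j]) ->
  bimodal m A -> (j < m)%N -> g \in idg (A j) ->
  Bset m A j x = Bset m A j (x + g).
Proof.
move=> Hdisj Hb Hj.
have step : forall a a' x, a \in A j -> a' \in A j -> Bset m A j x ->
    Bset m A j (x + (a' - a)).
  move=> a a' y aA a'A yB.
  have Hd : a - y != 0.
    rewrite subr_eq0; apply/eqP => Hay; subst y.
    case/existsP: yB => k /andP [kj aAk].
    have := Hdisj k j (ltn_ord k) Hj (fun e => ltac:(by move/eqP: kj; apply)).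
    by move/disjointFr => /(_ a aAk); rewrite aA.
  have := @BM _ _ _ _ a a' Hb Hj Hd aA; rewrite subKr => /(_ yB a'A).
  by rewrite opprB addrCA addrC.
set K := [set g | [forall y, Bset m A j y == Bset m A j (y + g)]].
have HK : is_subgroup K.
  apply/andP; split; first by rewrite inE; apply/forallP => y; rewrite addr0.
  apply/forall_inP => u; rewrite inE => /forallP Hu.
  apply/forall_inP => v; rewrite inE => /forallP Hv.
  rewrite inE; apply/forallP => y; apply/eqP.
  by rewrite (eqP (Hv (y + (u - v)))) addrA subrK (eqP (Hu y)).
have Hdk : diffs (A j) \subset K.
  apply/subsetP => d /imset2P [a' a a'A aA ->]; rewrite inE.
  apply/forallP => z; apply/eqP; apply/idP/idP; first exact: step.
  move/(step a' a _ a'A aA).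
  by rewrite -opprB addrNK.
move=> Hg; have := subsetP (idg_min _ _ HK Hdk) g Hg; rewrite inE => /forallP H.
exact: (eqP (H x)).
Qed.

Definition Uset (m : nat) (A : nat -> {set G}) (x : G) : bool :=
  [exists k : 'I_m, x \in A k].

Lemma Usplit m (A : nat -> {set G}) j x : (j < m)%N ->
  Uset m A x = (x \in A j) || Bset m A j x.
Proof.
move=> Hj; apply/existsP/orP.
  case=> k xk; case: (eqVneq (val k) j) => [<-|kj]; first by left.
  by right; apply/existsP; exists k; rewrite kj.
case=> [xj|/existsP [k /andP [_ xk]]]; last by exists k.
by exists (Ordinal Hj).
Qed.

Lemma Bset_notin m (A : nat -> {set G}) j x :
  (forall i j, (i < m)%N -> (j < m)%N -> i <> j -> [disjoint A i & A j]) ->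
  (j < m)%N -> Bset m A j x -> x \in A j -> False.
Proof.
move=> Hdisj Hj /existsP [k /andP [kj xk]] xj.
have := Hdisj k j (ltn_ord k) Hj (fun e => ltac:(by move/eqP: kj; apply)).
by move/disjointFr => /(_ x xk); rewrite xj.
Qed.

End Aux.
Arguments sg0 {G K}.
Arguments sgB {G K x y}.
Arguments sgN {G K y}.
Arguments sgD {G K x y}.
Arguments idg_min {G} A K.
Arguments idg_diff {G A x y}.
Arguments idg_sg {G} A.
Arguments Usplit {G m A j x}.
Arguments Bset_notin {G m A j x}.
Arguments Bset {G} m A j x.
Arguments Uset {G} m A x.


Theorem proposition3p8 (G : finZmodType) (m r : nat) (A : nat -> {set G}) :
  (* pairwise disjoint, nonempty *)
  (forall i j, (i < m)%N -> (j < m)%N -> i <> j -> [disjoint A i & A j]) ->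
  (forall i, (i < m)%N -> A i != set0) ->
  bimodal m A ->
  (* |A_i| < |H_i| exactly for the first r indices 0, ..., r-1 *)
  (2 <= r)%N -> (r <= m)%N ->
  (forall i, (i < m)%N -> (#|A i| < #|idg (A i)|)%N = (i < r)%N) ->
  (* canonical position: D = (a_1 + H_1) \ A_1 is a subgroup *)
  forall a1 : G, a1 \in A 0%N ->
  is_subgroup (coset_add a1 (idg (A 0%N)) :\: A 0%N) ->
  forall i, (r <= i < m)%N ->
    idg (A i) \subset (coset_add a1 (idg (A 0%N)) :\: A 0%N).
Proof.
move=> Hdisj Hne Hb Hr Hrm Hsize a1 Ha1 HD i /andP [Hri Him].
have H0m : (0 < m)%N := leq_ltn_trans (leq0n i) Him.
set H0 := idg (A 0%N).
have : 0 \in coset_add a1 H0 :\: A 0%N := sg0 HD.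
rewrite in_setD => /andP [nA00 D0].
have [g0 g0H a1g0] : exists2 g0, g0 \in H0 & a1 + g0 = 0.
  by case/imsetP: D0 => g gH e; exists g.
have a1E : a1 = - g0 by apply/eqP; rewrite -addr_eq0 a1g0.
have nB00 : ~~ Bset m A 0 0.
  apply/negP => B0.
  have := @Bperiodic _ _ _ _ (- g0) 0 Hdisj Hb H0m (sgN (idg_sg _) g0H).
  rewrite B0 add0r -a1E => /esym B1.
  exact: (Bset_notin Hdisj H0m B1 Ha1).
have /set0Pn [b bA] := Hne i Him.
have Hsz : (#|idg (A i)| <= #|A i|)%N.
  by move: (Hsize i Him); rewrite [(i < r)%N]ltnNge Hri /= => /negbT; rewrite -leqNgt.
have Hcos : forall h, h \in idg (A i) -> b + h \in A i.
  move=> h hH.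
  set S := [set x - b | x in A i].
  have SI : S \subset idg (A i).
    by apply/subsetP => y /imsetP [x xA ->]; exact: idg_diff.
  have cS : #|S| = #|A i|.
    by apply: card_imset => x y e; rewrite -(subrK b x) e subrK.
  have /eqP SE : S == idg (A i) by rewrite eqEcard SI cS Hsz.
  by move: hH; rewrite -SE => /imsetP [x xA ->]; rewrite subrKC.
have HU : forall h y, h \in idg (A i) -> Uset m A y -> Uset m A (y + h).
  move=> h y hH; rewrite !(Usplit Him) => /orP [yA|yB].
    have := Hcos _ (sgD (idg_sg _) (idg_diff yA bA) hH).
    by rewrite addrA subrKC => ->.
  by rewrite -(@Bperiodic _ _ _ _ h y Hdisj Hb Him hH) yB orbT.
have nU0 : ~~ Uset m A 0 by rewrite (Usplit H0m) negb_or nA00 nB00.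
have Hstab : forall h, h \in idg (A i) -> forall a, a \in A 0%N -> a + h \in A 0%N.
  move=> h hH a aA; have [->|hn0] := eqVneq h 0; first by rewrite addr0.
  apply/negPn/negP => Hah.
  have : Uset m A (a + h) by apply: HU => //; rewrite (Usplit H0m) aA.
  rewrite (Usplit H0m) (negbTE Hah) /= => Bah.
  have hn0' : - h != 0 by rewrite oppr_eq0.
  have := @BM _ _ _ _ (- h) a a1 Hb H0m hn0' aA; rewrite !opprK => /(_ Bah Ha1).
  rewrite (@Bperiodic _ _ _ _ g0 _ Hdisj Hb H0m g0H) addrAC a1g0 add0r => Bh.
  have : Uset m A h by rewrite (Usplit H0m) Bh orbT.
  move/(HU (- h) h (sgN (idg_sg _) hH)); rewrite subrr.
  by move/negP: nU0.
apply/subsetP => h hH; rewrite in_setD; apply/andP; split.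
  apply/negP => hA; have := Hstab (- h) (sgN (idg_sg _) hH) h hA.
  by rewrite subrr (negbTE nA00).
apply/imsetP; exists (g0 + h); last by rewrite addrA a1g0 add0r.
apply: sgD (idg_sg _) g0H _.
by have := idg_diff (Hstab h hH a1 Ha1) Ha1; rewrite [a1 + h]addrC addrK.
Qed.
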